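(* Let $\{G_1,\dots,G_g\}$ be a partition of $\{1,\dots,p\}$ into non-empty groups. Then the group wedge $\|\beta\|_{GWedge}:=\|\beta^{\mathcal{G}}\|_W$ defines a norm on $\mathbb{R}^p$.
   Context: For $\beta\in\mathbb{R}^p$ and a group $G_j$, $\|\beta_{G_j}\|_2:=\sqrt{|G_j|}\sqrt{\sum_{i\in G_j}\beta_i^2}$, and $\beta^{\mathcal{G}}:=(\|\beta_{G_1}\|_2,\dots,\|\beta_{G_g}\|_2)^{T}\in\mathbb{R}^g$. The wedge norm on $\mathbb{R}^g$ is $\|x\|_W:=\inf_{a\in\mathcal{A}}\frac12\sum_{j=1}^g\big(x_j^2/a_j+a_j\big)$ with $\mathcal{A}:=\{a\in\mathbb{R}^g:a_j>0\ \forall j,\ a_1\ge\dots\ge a_g\}$. *)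

(* Defs.v *)
From HB Require Import structures.
From mathcomp Require Import all_boot all_order all_algebra.
From mathcomp Require Import classical_sets reals.
Set Implicit Arguments. Unset Strict Implicit. Unset Printing Implicit Defensive.
Import Order.TTheory GRing.Theory Num.Theory.
Local Open Scope ring_scope.
Local Open Scope classical_set_scope.

Definition group_l2 {R : realType} {p : nat} (Gj : {set 'I_p}) (beta : 'I_p -> R) : R :=
  Num.sqrt (#|Gj|%:R) * Num.sqrt (\sum_(i in Gj) beta i ^+ 2).

Definition group_vec {R : realType} {p g : nat} (G : 'I_g -> {set 'I_p})
  (beta : 'I_p -> R) : 'I_g -> R := fun j => group_l2 (G j) beta.

Definition wedge_cone {R : realType} {g : nat} (a : 'I_g -> R) : Prop :=
  (forall j, 0 < a j) /\ (forall j k : 'I_g, (j <= k)%N -> a k <= a j).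

Definition wedge_norm {R : realType} {g : nat} (x : 'I_g -> R) : R :=
  inf [set v : R | exists a : 'I_g -> R, wedge_cone a /\
        v = 2^-1 * \sum_(j < g) (x j ^+ 2 / a j + a j)].

Definition group_wedge {R : realType} {p g : nat} (G : 'I_g -> {set 'I_p})
  (beta : 'I_p -> R) : R := wedge_norm (group_vec G beta).

Definition is_group_partition {p g : nat} (G : 'I_g -> {set 'I_p}) : Prop :=
  (forall j, G j != finset.set0) /\
  (forall j k, j != k -> G j :&: G k = finset.set0) /\
  (forall i : 'I_p, exists j, i \in G j).

Definition is_norm {R : realType} {p : nat} (N : ('I_p -> R) -> R) : Prop :=
  (forall x, 0 <= N x) /\
  (forall x, N x = 0 -> forall i, x i = 0) /\
  (forall (c : R) x, N (fun i => c * x i) = `|c| * N x) /\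
  (forall x y, N (fun i => x i + y i) <= N x + N y).

(* Main.v *)
Require Import Defs.
From mathcomp Require Import all_boot all_order all_algebra.
From mathcomp Require Import classical_sets reals ring lra.
Import Order.TTheory GRing.Theory Num.Theory.
Set Implicit Arguments. Unset Strict Implicit.
Local Open Scope ring_scope.

Section W.
Variables (R : realType) (g : nat).
Implicit Types (x y : 'I_g -> R) (a b : 'I_g -> R).

Definition V x a : R := 2^-1 * \sum_(j < g) (x j ^+ 2 / a j + a j).

Lemma amgm (x a : R) : 0 < a -> 2 * `|x| <= x ^+ 2 / a + a.
Proof.
move=> a0.
have h : 2 * `|x| * a <= x ^+ 2 + a * a.
  have e : x ^+ 2 = `|x| ^+ 2 by rewrite real_normK ?num_real.
  have := sqr_ge0 (`|x| - a); rewrite e; nra.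
have -> : x ^+ 2 / a + a = (x ^+ 2 + a * a) / a by field; rewrite lt0r_neq0.
rewrite ler_pdivlMr //.
Qed.

Lemma V_ge x a : wedge_cone a -> \sum_(j < g) `|x j| <= V x a.
Proof.
case=> pos _; rewrite /V.
have : \sum_(j < g) 2 * `|x j| <= \sum_(j < g) (x j ^+ 2 / a j + a j).
  by apply: ler_sum => j _; apply: amgm.
rewrite -mulr_sumr => h.
have := h; lra.
Qed.

Lemma sum_abs_ge0 x : 0 <= \sum_(j < g) `|x j|.
Proof. by apply: sumr_ge0 => j _. Qed.

Lemma cone1 : wedge_cone (fun _ : 'I_g => (1 : R)).
Proof. by split => // j k _. Qed.

Lemma wn_lb x a : wedge_cone a -> wedge_norm x <= V x a.
Proof.
move=> ha; rewrite /wedge_norm.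
apply: (ge_inf (E := [set v : R | exists a : 'I_g -> R, wedge_cone a /\
        v = 2^-1 * \sum_(j < g) (x j ^+ 2 / a j + a j)])).
  exists 0 => v [b [hb ->]].
  exact: le_trans (sum_abs_ge0 x) (V_ge x hb).
by exists a.
Qed.

Lemma wn_inf x w : (forall a, wedge_cone a -> w <= V x a) -> w <= wedge_norm x.
Proof.
move=> H; rewrite /wedge_norm; apply: lb_le_inf.
  by exists (V x (fun _ => 1)), (fun _ => 1); split => //; exact: cone1.
by move=> v [b [hb ->]]; apply: H.
Qed.

Lemma wn_ge x : \sum_(j < g) `|x j| <= wedge_norm x.
Proof. by apply: wn_inf => a ha; apply: V_ge. Qed.

Lemma wn_mono x y : (forall j, x j ^+ 2 <= y j ^+ 2) -> wedge_norm x <= wedge_norm y.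
Proof.
move=> H; apply: wn_inf => a ha; apply: le_trans (wn_lb x ha) _.
rewrite /V ler_pM2l ?invr_gt0 ?ltr0n //; apply: ler_sum => j _.
rewrite lerD2r ler_pM2r ?invr_gt0 //; by case: ha.
Qed.

Lemma wn_scale x t : 0 < t -> wedge_norm (fun j => t * x j) <= t * wedge_norm x.
Proof.
move=> t0; rewrite -ler_pdivrMl //; apply: wn_inf => a ha.
have hta : wedge_cone (fun j => t * a j).
  case: ha => p m; split => [j|j k jk]; first by rewrite mulr_gt0.
  by rewrite ler_pM2l // m.
rewrite ler_pdivrMl //; apply: le_trans (wn_lb _ hta) _.
rewrite /V mulrCA ler_pM2l ?invr_gt0 ?ltr0n // mulr_sumr; apply: ler_sum => j _.
have aj : a j != 0 by case: ha => p _; rewrite lt0r_neq0.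
rewrite le_eqVlt; apply/orP; left; apply/eqP; field.
by rewrite aj lt0r_neq0.
Qed.

Lemma cone_add a b : wedge_cone a -> wedge_cone b -> wedge_cone (fun j => a j + b j).
Proof.
case=> pa ma [pb mb]; split => [j|j k jk]; first by rewrite addr_gt0.
by rewrite lerD // ?ma ?mb.
Qed.

Lemma titu (x y a b : R) : 0 < a -> 0 < b ->
  (x + y) ^+ 2 / (a + b) <= x ^+ 2 / a + y ^+ 2 / b.
Proof.
move=> a0 b0.
have ab : 0 < a + b by rewrite addr_gt0.
rewrite ler_pdivrMr //.
have -> : (x ^+ 2 / a + y ^+ 2 / b) * (a + b) =
   x ^+ 2 + y ^+ 2 + (x ^+ 2 * b ^+ 2 + y ^+ 2 * a ^+ 2) / (a * b).
  by field; rewrite lt0r_neq0 ?lt0r_neq0.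
have h : 2 * x * y * (a * b) <= x ^+ 2 * b ^+ 2 + y ^+ 2 * a ^+ 2.
  have := sqr_ge0 (x * b - y * a); nra.
have : 2 * x * y <= (x ^+ 2 * b ^+ 2 + y ^+ 2 * a ^+ 2) / (a * b).
  by rewrite ler_pdivlMr // mulr_gt0.
nra.
Qed.

Lemma V_add x y a b : wedge_cone a -> wedge_cone b ->
  V (fun j => x j + y j) (fun j => a j + b j) <= V x a + V y b.
Proof.
case=> pa _ [pb _]; rewrite /V -mulrDr ler_pM2l ?invr_gt0 ?ltr0n //.
rewrite -big_split /=; apply: ler_sum => j _.
have := titu (x j) (y j) (pa j) (pb j); lra.
Qed.

Lemma wn_add x y : wedge_norm (fun j => x j + y j) <= wedge_norm x + wedge_norm y.
Proof.
rewrite -lerBlDr; apply: wn_inf => b hb.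
rewrite lerBlDr addrC -lerBlDr; apply: wn_inf => a ha.
rewrite lerBlDr; apply: le_trans (wn_lb _ (cone_add hb ha)) _.
by rewrite addrC; apply: V_add.
Qed.

Lemma wn_eq x y : (forall j, x j ^+ 2 = y j ^+ 2) -> wedge_norm x = wedge_norm y.
Proof.
by move=> H; apply/le_anti; rewrite !wn_mono // => j; rewrite H.
Qed.

Lemma wn_scale_pos x t : 0 < t -> wedge_norm (fun j => t * x j) = t * wedge_norm x.
Proof.
move=> t0; apply/le_anti; rewrite wn_scale //=.
have e : wedge_norm x = wedge_norm (fun j => t^-1 * (t * x j)).
  by apply: wn_eq => j; rewrite mulrA mulVf ?mul1r // lt0r_neq0.
rewrite e.
have tp : 0 < t^-1 by rewrite invr_gt0.
have h := wn_scale (fun j => t * x j) tp.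
apply: le_trans (ler_wpM2l (ltW t0) h) _.
by rewrite mulrA mulfV ?mul1r // lt0r_neq0.
Qed.

Lemma wn_scale_eq x t : 0 <= t -> wedge_norm (fun j => t * x j) = t * wedge_norm x.
Proof.
rewrite le_eqVlt => /orP [/eqP <-|t0]; last exact: wn_scale_pos.
rewrite mul0r.
have e : wedge_norm (fun j => 0 * x j) = wedge_norm (fun j => 2 * (0 * x j)).
  by apply: wn_eq => j; rewrite !mul0r mulr0.
have := wn_scale_pos (fun j => 0 * x j) (ltr0Sn _ 1).
rewrite -e; lra.
Qed.

End W.

Section G.
Variables (R : realType) (p : nat).
Implicit Types (b c : 'I_p -> R) (A : {set 'I_p}).

Lemma sumsq_ge0 A b : 0 <= \sum_(i in A) b i ^+ 2.
Proof. by apply: sumr_ge0 => i _; apply: sqr_ge0. Qed.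

Lemma sumsq0 A b : Num.sqrt (\sum_(i in A) b i ^+ 2) = 0 -> forall i, i \in A -> b i = 0.
Proof.
move=> /eqP; rewrite sqrtr_eq0 => h.
have e : \sum_(i in A) b i ^+ 2 = 0 by apply/le_anti; rewrite h sumsq_ge0.
move=> i iA; apply/eqP; rewrite -sqrf_eq0; apply/eqP.
by apply: (psumr_eq0P _ e) => // j _; apply: sqr_ge0.
Qed.

Lemma cs A b c : \sum_(i in A) b i * c i <=
  Num.sqrt (\sum_(i in A) b i ^+ 2) * Num.sqrt (\sum_(i in A) c i ^+ 2).
Proof.
set B := \sum_(i in A) b i ^+ 2; set C := \sum_(i in A) c i ^+ 2.
set u := Num.sqrt B; set v := Num.sqrt C; set S := \sum_(i in A) _.
have u0 : 0 <= u by apply: sqrtr_ge0.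
have v0 : 0 <= v by apply: sqrtr_ge0.
have uB : u ^+ 2 = B by rewrite sqr_sqrtr // sumsq_ge0.
have vC : v ^+ 2 = C by rewrite sqr_sqrtr // sumsq_ge0.
have key : (u * v * 2) * S <= v ^+ 2 * B + u ^+ 2 * C.
  rewrite /S mulr_sumr /B /C !mulr_sumr -big_split /=.
  apply: ler_sum => i _; have := sqr_ge0 (b i * v - c i * u); nra.
rewrite -uB -vC in key.
have [uv0|] := ltP 0 (u * v).
  have : (u * v) * S <= (u * v) * (u * v) by nra.
  by rewrite ler_pM2l.
rewrite le_eqVlt => /orP [|]; last first.
  by move=> h; have := mulr_ge0 u0 v0; rewrite leNgt h.
rewrite mulf_eq0 => /orP [] /eqP z.
  have := sumsq0 z => bz; rewrite /S big1 ?mulr_ge0 // => i iA; by rewrite bz // mul0r.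
have := sumsq0 z => cz; rewrite /S big1 ?mulr_ge0 // => i iA; by rewrite cz // mulr0.
Qed.

Lemma mink A b c : Num.sqrt (\sum_(i in A) (b i + c i) ^+ 2) <=
  Num.sqrt (\sum_(i in A) b i ^+ 2) + Num.sqrt (\sum_(i in A) c i ^+ 2).
Proof.
have h := cs A b c.
set u := Num.sqrt _ in h *; set v := Num.sqrt (\sum_(i in A) c i ^+ 2) in h *.
have u0 : 0 <= u by apply: sqrtr_ge0.
have v0 : 0 <= v by apply: sqrtr_ge0.
have uB : u ^+ 2 = \sum_(i in A) b i ^+ 2 by rewrite sqr_sqrtr // sumsq_ge0.
have vC : v ^+ 2 = \sum_(i in A) c i ^+ 2 by rewrite sqr_sqrtr // sumsq_ge0.
rewrite -[u + v]ger0_norm ?addr_ge0 // -sqrtr_sqr ler_wsqrtr //.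
have -> : \sum_(i in A) (b i + c i) ^+ 2 =
   \sum_(i in A) b i ^+ 2 + \sum_(i in A) c i ^+ 2 + 2 * \sum_(i in A) b i * c i.
  rewrite mulr_sumr -!big_split /=; apply: eq_bigr => i _; ring.
rewrite -uB -vC; nra.
Qed.

Lemma gl2_ge0 A b : 0 <= group_l2 A b.
Proof. by rewrite /group_l2 mulr_ge0 // sqrtr_ge0. Qed.

Lemma gl2_add A b c : group_l2 A (fun i => b i + c i) <= group_l2 A b + group_l2 A c.
Proof.
rewrite /group_l2 -mulrDr ler_wpM2l ?sqrtr_ge0 //; exact: mink.
Qed.

Lemma gl2_scale A b (k : R) : group_l2 A (fun i => k * b i) = `|k| * group_l2 A b.
Proof.
rewrite /group_l2 mulrCA; congr (_ * _).
have -> : \sum_(i in A) (k * b i) ^+ 2 = k ^+ 2 * \sum_(i in A) b i ^+ 2.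
  by rewrite mulr_sumr; apply: eq_bigr => i _; rewrite exprMn.
by rewrite sqrtrM ?sqr_ge0 // sqrtr_sqr.
Qed.

End G.

Theorem lemma8 (R : realType) (p g : nat) (G : 'I_g -> {set 'I_p}) :
  is_group_partition G -> is_norm (@group_wedge R p g G).
Proof.
case=> ne [_ cover]; rewrite /is_norm /group_wedge; split; [|split; [|split]].
- move=> x; exact: le_trans (sum_abs_ge0 _) (wn_ge _).
- move=> x h0 i.
  have hs := wn_ge (group_vec G x); rewrite h0 in hs.
  have e : \sum_(j < g) `|group_vec G x j| = 0 by apply/le_anti; rewrite hs sum_abs_ge0.
  have [j ij] := cover i.
  have := psumr_eq0P (fun k _ => normr_ge0 (group_vec G x k)) e.
  move=> /(_ j isT).
  move=> /eqP; rewrite normr_eq0 /group_vec /group_l2 mulf_eq0 => /orP [].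
    by rewrite sqrtr_eq0 leNgt ltr0n card_gt0 ne.
  by move=> /eqP /sumsq0; apply.
- move=> c x.
  rewrite -wn_scale_eq ?normr_ge0 //; apply: wn_eq => j.
  by rewrite /group_vec gl2_scale.
- move=> x y.
  apply: le_trans (wn_add _ _).
  apply: wn_mono => j; rewrite /group_vec.
  have h := gl2_add (G j) x y; have := gl2_ge0 (G j) (fun i => x i + y i).
  have := gl2_ge0 (G j) x; have := gl2_ge0 (G j) y; nra.
Qed.
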